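(* For every $k\in\omega\setminus\{0\}$, $h^d(T_k)\ge k-1$, where $h$ is the depth.
   Context: Notation: $\omega=\{0,1,2,\dots\}$; $\mathcal P(\omega)$ is the set of nonempty finite subsets of $\omega$; $E_2=\{0,1\}$. $P=\{f_i:i\in\omega\}$ is a set of attributes. Decision tables: $\mathcal M_2^\infty$ is the set of rectangular tables filled with numbers from $E_2$, whose columns are labeled with pairwise different attributes from $P$, whose rows are pairwise different, and each row of which is labeled with a set from $\mathcal P(\omega)$ (its set of decisions). The empty table is denoted $\Lambda$. For $T\in\mathcal M_2^\infty$: $\Pi(T)$ is the intersection of the decision sets of all rows (common decisions); $\mathrm{At}(T)$ is the set of attributes labeling columns. For nonempty $T$ and a word $\alpha=(f_{i_1},\delta_1)\cdots(f_{i_m},\delta_m)$ with $f_{i_j}\in\mathrm{At}(T)$, $\delta_j\in E_2$, $T\alpha$ is the subtable consisting of the rows having value $\delta_j$ in column $f_{i_j}$ for all $j$; $T\lambda=T$ for the empty word $\lambda$. Decision trees: a $2$-decision tree is a finite directed rooted tree with at least two nodes in which the root and the edges leaving the root are unlabeled, each terminal node is labeled with a decision from $\omega$, and each other node is labeled with an attribute from $P$, each edge leaving such a node being labeled with a number from $E_2$. $\mathrm{At}(\Gamma)$ is the set of attributes labeling nodes of $\Gamma$. For a complete path $\tau=v_1,d_1,\dots,v_m,d_m,v_{m+1}$ (from the root to a terminal node), $\pi(\tau)=\lambda$ if $m=1$, and otherwise $\pi(\tau)=(f_{i_2},\delta_2)\cdots(f_{i_m},\delta_m)$ where $v_j$ is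 labeled $f_{i_j}$ and $d_j$ is labeled $\delta_j$; $T(\tau)=T\pi(\tau)$. For $T\ne\Lambda$, a deterministic decision tree for $T$ is a $2$-decision tree $\Gamma$ with $\mathrm{At}(\Gamma)\subseteq\mathrm{At}(T)$ in which exactly one edge leaves the root, edges leaving any node that is neither the root nor terminal are labeled with pairwise different numbers, every row of $T$ belongs to $T(\tau)$ for some complete path $\tau$, and for every complete path $\tau$ either $T(\tau)=\Lambda$ or the decision at the terminal node of $\tau$ belongs to $\Pi(T(\tau))$. The depth of $\Gamma$ is $h(\Gamma)=\max_\tau|\pi(\tau)|$; $h^d(T)$ is the minimum depth of a deterministic decision tree for $T$. The graph $G_k$ and table $T_k$ ($k\ge1$): $G_k$ is a directed graph whose nodes are arranged in $k$ layers, layer $s$ ($1\le s\le k$) containing $s$ nodes; the nodes are numbered $1,\dots,m(k)$, $m(k)=k(k+1)/2$, layer by layer from the top and from left to right within a layer (so the $j$th node of layer $s$ has number $s(s-1)/2+j$). For a node $i$ that is the $j$th node of layer $s<k$, its left child $l(i)$ is the $j$th node of layer $s+1$ and its right child $p(i)$ is the $(j+1)$th node of layer $s+1$; the edges of $G_k$ go from each node to its two children. Define $\nu_k:E_2^{m(k)}\to\mathcal P(\omega)$: for $\bar\delta=(\delta_1,\dots,\delta_{m(k)})$, $\nu_k(\bar\delta)\subseteq\{0,1,\dots,m(k)\}$, where $0\in\nu_k(\bar\delta)$ iff $\delta_1=0$; for a node $i$ not in layer $k$, $i\in\nu_k(\bar\delta)$ iff $\delta_i=1$ and $\delta_{l(i)}=\delta_{p(i)}=0$;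 for a node $i$ in layer $k$, $i\in\nu_k(\bar\delta)$ iff $\delta_i=1$. $T_k\in\mathcal M_2^\infty$ is the table with $m(k)$ columns labeled $f_1,\dots,f_{m(k)}$ (column $f_i$ corresponding to node $i$), whose rows are all $2^{m(k)}$ tuples of $E_2^{m(k)}$, each row $\bar\delta$ labeled with $\nu_k(\bar\delta)$. *)

(* Defs.v *)
From mathcomp Require Import all_boot.
Set Implicit Arguments. Unset Strict Implicit. Unset Printing Implicit Defensive.

(** Attribute f_i is represented by its index i : nat; decisions are nats.
    A row is a pair (values, decision set): the values are listed in the order
    of the column labels [tat T]; the decision set is a finite list of nats. *)
Definition row := (seq bool * seq nat)%type.

Record table := Table { tat : seq nat ; trows : seq row }.

(** Well-formedness of a table in M_2^infty (not needed by the statement, given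
    for documentation; T_k below satisfies it). *)
Definition table_wf (T : table) : bool :=
  [&& uniq (tat T), uniq (trows T) &
      all (fun r => (size r.1 == size (tat T)) && (r.2 != [::])) (trows T)].

Definition rval (T : table) (r : row) (i : nat) : bool :=
  nth false r.1 (index i (tat T)).

Definition word := seq (nat * bool).

Definition sat (T : table) (r : row) (a : word) : bool :=
  all (fun p => rval T r p.1 == p.2) a.

Definition subrows (T : table) (a : word) : seq row :=
  [seq r <- trows T | sat T r a].

Definition in_Pi (rs : seq row) (d : nat) : bool := all (fun r => d \in r.2) rs.

(** The root of a deterministic decision tree has exactly one outgoing edge;
    we represent the whole tree by the subtree [t] hanging below that edge.
    A [DLeaf d] is a terminal node labelled with decision d; a [DNode i c0 c1]
    is a node labelled with attribute f_i whose outgoing edges are labelled 0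
    (to c0, if present) and 1 (to c1, if present); labels are thus pairwise
    different. *)
Inductive dtree :=
| DLeaf of nat
| DNode of nat & option dtree & option dtree.

Fixpoint dt_wf (t : dtree) : bool :=
  match t with
  | DLeaf _ => true
  | DNode _ c0 c1 =>
      [&& isSome c0 || isSome c1,
          (if c0 is Some t0 then dt_wf t0 else true) &
          (if c1 is Some t1 then dt_wf t1 else true)]
  end.

Fixpoint dt_attrs (t : dtree) : seq nat :=
  match t with
  | DLeaf _ => [::]
  | DNode i c0 c1 =>
      i :: (if c0 is Some t0 then dt_attrs t0 else [::])
        ++ (if c1 is Some t1 then dt_attrs t1 else [::])
  end.

(** complete paths: pairs (pi(tau), decision at the terminal node of tau) *)
Fixpoint dt_paths (t : dtree) : seq (word * nat) :=
  match t with
  | DLeaf d => [:: ([::], d)]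
  | DNode i c0 c1 =>
      (if c0 is Some t0 then [seq ((i, false) :: p.1, p.2) | p <- dt_paths t0] else [::])
   ++ (if c1 is Some t1 then [seq ((i, true) :: p.1, p.2) | p <- dt_paths t1] else [::])
  end.

Definition dt_depth (t : dtree) : nat := \max_(p <- dt_paths t) size p.1.

Definition is_det_tree (T : table) (t : dtree) : bool :=
  [&& dt_wf t,
      all (fun i => i \in tat T) (dt_attrs t),
      all (fun r => has (fun p => sat T r p.1) (dt_paths t)) (trows T) &
      all (fun p => (subrows T p.1 == [::]) || in_Pi (subrows T p.1) p.2)
          (dt_paths t)].

Definition mk (k : nat) : nat := k * k.+1 %/ 2.

(** number of the j-th node (1 <= j <= s) of layer s *)
Definition node_num (s j : nat) : nat := s * s.-1 %/ 2 + j.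

Fixpoint all_tuples (n : nat) : seq (seq bool) :=
  match n with
  | 0 => [:: [::]]
  | n'.+1 => [seq b :: s | b <- [:: false; true], s <- all_tuples n']
  end.

(** delta_i for the 1-based node number i *)
Definition dval (delta : seq bool) (i : nat) : bool := nth false delta i.-1.

Definition nu (k : nat) (delta : seq bool) : seq nat :=
  (if ~~ dval delta 1 then [:: 0] else [::]) ++
  [seq node_num sj.1 sj.2 |
     sj <- [seq (s, j) | s <- iota 1 k, j <- iota 1 s] &
     dval delta (node_num sj.1 sj.2) &&
     ((sj.1 < k) ==> (~~ dval delta (node_num sj.1.+1 sj.2) &&
                      ~~ dval delta (node_num sj.1.+1 sj.2.+1)))].

Definition Tk (k : nat) : table :=
  Table (iota 1 (mk k)) [seq (d, nu k d) | d <- all_tuples (mk k)].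

(* Main.v *)
Require Import Defs.
From mathcomp Require Import all_boot zify.
From Stdlib Require Import Classical.
Set Implicit Arguments. Unset Strict Implicit. Unset Printing Implicit Defensive.

Definition tri (a : nat) : nat := a * a.-1 %/ 2.

Lemma triS a : tri a.+1 = tri a + a.
Proof.
rewrite /tri /=.
have -> : a.+1 * a = a * 2 + a * a.-1 by case: a => [|a] //=; lia.
by rewrite divnMDl // addnC.
Qed.

Lemma tri_mono a b : a <= b -> tri a <= tri b.
Proof.
elim: b => [|b IH]; first by rewrite leqn0 => /eqP ->.
rewrite leq_eqVlt => /orP [/eqP -> //|]; rewrite ltnS => /IH.
rewrite triS; lia.
Qed.

Lemma node_numE s j : node_num s j = tri s + j.
Proof. by []. Qed.

Lemma node_num_inj a c a' c' : 1 <= c <= a -> 1 <= c' <= a' ->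
  node_num a c = node_num a' c' -> a = a' /\ c = c'.
Proof.
rewrite !node_numE => /andP [c1 ca] /andP [c1' ca'] E.
have H : forall x y u v, 1 <= u -> v <= x -> x < y -> tri x + v < tri y + u.
  move=> x y u v u1 vx xy.
  have := tri_mono xy; rewrite triS; lia.
case: (ltngtP a a') => [lt|lt|eq].
- have := H _ _ _ _ c1' ca lt; lia.
- have := H _ _ _ _ c1 ca' lt; lia.
- subst a'; split => //; lia.
Qed.

Lemma mkE k : mk k = tri k.+1.
Proof. by rewrite /mk /tri /= mulnC. Qed.

Lemma node_num_bound k a c : 1 <= c <= a -> a <= k -> 1 <= node_num a c <= mk k.
Proof.
move=> /andP [c1 ca] ak; rewrite node_numE mkE.
have := tri_mono (ak : a.+1 <= k.+1); rewrite triS; lia.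
Qed.

Fixpoint cnodes (s j : nat) (bs : seq bool) : seq (nat * nat) :=
  (s, j) :: (if bs is b :: bs' then cnodes s.+1 (j + b) bs' else [::]).

Lemma cnodes_range s j bs a c : (a, c) \in cnodes s j bs ->
  [/\ s <= a <= s + size bs, j <= c & c + s <= j + a].
Proof.
elim: bs s j => [|b bs IH] s j /=; rewrite inE.
  by move=> /eqP [-> ->]; split=> //; lia.
case/orP => [/eqP [-> ->]|/IH [H1 H2 H3]]; first by split=> //; lia.
by split; case: b H1 H2 H3 => /=; lia.
Qed.

Lemma cnodes_succ s j bs a c : (a, c) \in cnodes s j bs -> a < s + size bs ->
  ((a.+1, c) \in cnodes s j bs) || ((a.+1, c.+1) \in cnodes s j bs).
Proof.
elim: bs s j => [|b bs IH] s j /=; rewrite inE.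
  by move=> /eqP [-> ->]; lia.
case/orP => [/eqP [-> ->]|Hin] Ha.
  move: Ha; case: bs {IH} => [|b' bs'] /= Ha;
  case: b => /=; rewrite !inE ?addn0 ?addn1 ?eqxx ?orbT //.
have := IH _ _ Hin; rewrite addSnnS => /(_ Ha) /orP [H|H];
  by rewrite !inE H ?orbT.
Qed.

Lemma cnodes_uniq s j bs a c c' : (a, c) \in cnodes s j bs ->
  (a, c') \in cnodes s j bs -> c = c'.
Proof.
elim: bs s j => [|b bs IH] s j /=; rewrite !inE.
  by move=> /eqP [_ ->] /eqP [_ ->].
case/orP => [/eqP [E1 E2]|H1] /orP [/eqP [E3 E4]|H2]; try by subst.
- subst; case: (cnodes_range H2); lia.
- subst; case: (cnodes_range H1); lia.
- exact: IH H1 H2.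
Qed.

Lemma cnodes_end s j bs : (s + size bs, j + count id bs) \in cnodes s j bs.
Proof.
elim: bs s j => [|b bs IH] s j /=; first by rewrite !addn0 inE.
rewrite inE; apply/orP; right.
by have := IH s.+1 (j + b); rewrite addSnnS addnA.
Qed.

Lemma cnodes_true s j n a c : (a, c) \in cnodes s j (nseq n true) -> c + s = j + a.
Proof.
elim: n s j => [|n IH] s j /=; rewrite inE.
  by move=> /eqP [-> ->]; lia.
by case/orP => [/eqP [-> ->]|/IH]; lia.
Qed.

Lemma cnodes_false s j n a c : (a, c) \in cnodes s j (nseq n false) -> c = j.
Proof.
elim: n s j => [|n IH] s j /=; rewrite inE.
  by move=> /eqP [_ ->].
by case/orP => [/eqP [_ ->]|/IH ->] //=; rewrite addn0.
Qed.

Lemma cnodes_head s j bs : (s, j) \in cnodes s j bs.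
Proof. by case: bs => [|b bs]; rewrite /= inE eqxx. Qed.

Definition avoidp s j (F : seq nat) bs :=
  all (fun p : nat * nat => node_num p.1 p.2 \notin F) (cnodes s j bs).

Lemma cnodes_valid s j bs a c : 1 <= j <= s -> (a, c) \in cnodes s j bs -> 1 <= c <= a.
Proof. move=> H /cnodes_range [H1 H2 H3]; lia. Qed.

Lemma avoid_filter s j F f bs : avoidp s j F bs -> avoidp s j [seq x <- F | x != f] bs.
Proof.
move=> /allP H; apply/allP => p /H; rewrite mem_filter; apply: contra => /andP [] //.
Qed.

Lemma avoid_unfilter s j F f bs : avoidp s j [seq x <- F | x != f] bs ->
  (forall p, p \in cnodes s j bs -> node_num p.1 p.2 != f) -> avoidp s j F bs.
Proof.
move=> /allP H Hn; apply/allP => p Hp; have := H p Hp; rewrite mem_filter.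
by rewrite (Hn p Hp).
Qed.

Lemma size_filter_lt (F : seq nat) f : f \in F -> size [seq x <- F | x != f] < size F.
Proof.
move=> Hf; rewrite size_filter.
have := count_predC (pred1 f) F.
have : 0 < count (pred1 f) F by rewrite -has_count has_pred1.
rewrite /predC /=.
have -> : count (fun x => ~~ (x == f)) F = count (fun x => x != f) F by [].
lia.
Qed.

Lemma size_filter_le1 (F : seq nat) f n : f \in F -> size F + 1 <= n.+1 ->
  size [seq x <- F | x != f] + 1 <= n.
Proof. move=> /size_filter_lt; lia. Qed.

Lemma two_chains n : forall s j F, 1 <= j <= s -> size F + 1 <= n ->
  (exists bs, size bs = n /\ avoidp s j F bs) ->
  exists bs1 bs2, [/\ size bs1 = n, size bs2 = n, avoidp s j F bs1,
    avoidp s j F bs2 & count id bs1 != count id bs2].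
Proof.
elim: n => [|n IH] s j F Hsj Hn; first lia.
case=> bs0 [Hs0]; case: bs0 Hs0 => [|b bs] //= [Hs]; rewrite /avoidp /= => /andP [Hapex Hbs].
case: b Hbs => /= Hbs.
- (* went right: alternative is all-left *)
  set L := nseq n false.
  case: (boolP (avoidp s j F (false :: L))) => HL.
    exists (true :: bs), (false :: L); split => /=; rewrite ?size_nseq ?Hs ?count_nseq //.
    by rewrite /avoidp /= Hapex.
  move/allPn: HL => [[a c] Hac Hin]; rewrite negbK /= in Hin.
  have Hc : c = j by apply: (@cnodes_false s j n.+1 a c).
  have Has : a != s.
    apply/negP => /eqP Eas; move: Hapex; by rewrite -Eas -Hc Hin.
  have [H1 H2 H3] := cnodes_range Hac.
  set f := node_num a c.
  have [bs1 [bs2 [S1 S2 A1 A2 C]]] : exists bs1 bs2, [/\ size bs1 = n, size bs2 = n,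
    avoidp s.+1 (j + 1) [seq x <- F | x != f] bs1,
    avoidp s.+1 (j + 1) [seq x <- F | x != f] bs2 & count id bs1 != count id bs2].
    apply: IH; first lia.
    + exact: size_filter_le1 Hin Hn.
    + exists bs; split => //; exact: avoid_filter.
  have Hno : forall bs', forall p, p \in cnodes s.+1 (j + 1) bs' -> node_num p.1 p.2 != f.
    move=> bs' [a' c'] Hp /=; apply/negP => /eqP E.
    have V1 : 1 <= c' <= a' by apply: (cnodes_valid _ Hp); lia.
    have V2 : 1 <= c <= a by apply: (cnodes_valid _ Hac); lia.
    have [Ea Ec] := node_num_inj V1 V2 E.
    case: (cnodes_range Hp); lia.
  exists (true :: bs1), (true :: bs2); split => //=; try by rewrite ?S1 ?S2.
  + by rewrite /avoidp /= Hapex; apply: avoid_unfilter A1 (Hno bs1).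
  + by rewrite /avoidp /= Hapex; apply: avoid_unfilter A2 (Hno bs2).
- (* went left: alternative is all-right *)
  set R := nseq n true.
  case: (boolP (avoidp s j F (true :: R))) => HR.
    exists (false :: bs), (true :: R); split => /=; rewrite ?size_nseq ?Hs ?count_nseq //.
    + by rewrite /avoidp /= Hapex.
    + rewrite /= mul1n add0n; have := count_size id bs; lia.
  move/allPn: HR => [[a c] Hac Hin]; rewrite negbK /= in Hin.
  have Hc : c + s = j + a by apply: (@cnodes_true s j n.+1 a c).
  have Has : a != s.
    apply/negP => /eqP Eas; move: Hapex.
    have -> : j = c by lia.
    by rewrite -Eas Hin.
  have [H1 H2 H3] := cnodes_range Hac.
  set f := node_num a c.
  have [bs1 [bs2 [S1 S2 A1 A2 C]]] : exists bs1 bs2, [/\ size bs1 = n, size bs2 = n,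
    avoidp s.+1 (j + 0) [seq x <- F | x != f] bs1,
    avoidp s.+1 (j + 0) [seq x <- F | x != f] bs2 & count id bs1 != count id bs2].
    apply: IH; first lia.
    + exact: size_filter_le1 Hin Hn.
    + exists bs; split => //; exact: avoid_filter.
  have Hno : forall bs', forall p, p \in cnodes s.+1 (j + 0) bs' -> node_num p.1 p.2 != f.
    move=> bs' [a' c'] Hp /=; apply/negP => /eqP E.
    have V1 : 1 <= c' <= a' by apply: (cnodes_valid _ Hp); lia.
    have V2 : 1 <= c <= a by apply: (cnodes_valid _ Hac); lia.
    have [Ea Ec] := node_num_inj V1 V2 E.
    case: (cnodes_range Hp); lia.
  exists (false :: bs1), (false :: bs2); split => //=; try by rewrite ?S1 ?S2.
  + by rewrite /avoidp /= Hapex; apply: avoid_unfilter A1 (Hno bs1).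
  + by rewrite /avoidp /= Hapex; apply: avoid_unfilter A2 (Hno bs2).
Qed.

Definition nums bs := [seq node_num p.1 p.2 | p <- cnodes 1 1 bs].
Definition dvec k bs := [seq x \in nums bs | x <- iota 1 (mk k)].
Definition row_of k bs : row := (dvec k bs, nu k (dvec k bs)).

Lemma all_tuples_mem n d : size d = n -> d \in all_tuples n.
Proof.
elim: n d => [|n IH] [|b d] //= [Hd].
have H := IH _ Hd.
by case: b; rewrite !mem_cat (map_f _ H) ?orbT.
Qed.

Lemma row_in k bs : row_of k bs \in trows (Tk k).
Proof.
rewrite /Tk /=; apply: (map_f (fun d => (d, nu k d))).
by apply: all_tuples_mem; rewrite size_map size_iota.
Qed.

Lemma nums_bound k bs x : 0 < k -> size bs = k.-1 -> x \in nums bs -> 1 <= x <= mk k.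
Proof.
move=> k0 Hs /mapP [[a c] Hac ->] /=.
have [H1 H2 H3] := cnodes_range Hac.
apply: node_num_bound; lia.
Qed.

Lemma nth_map_index (g : nat -> bool) (s : seq nat) i :
  nth false [seq g x | x <- s] (index i s) = (i \in s) && g i.
Proof.
case: (boolP (i \in s)) => Hi /=.
  by rewrite (nth_map 0) ?index_mem // nth_index.
by rewrite nth_default // size_map memNindex.
Qed.

Lemma rval_row k bs i : 0 < k -> size bs = k.-1 ->
  rval (Tk k) (row_of k bs) i = (i \in nums bs).
Proof.
move=> k0 Hs; rewrite /rval /row_of /dvec /= nth_map_index.
case: (boolP (i \in nums bs)) => Hi; last by rewrite andbF.
have := nums_bound k0 Hs Hi; rewrite mem_iota andbT => H; apply/andP; split => //.
all: lia.
Qed.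

Lemma dval_row k bs x : 0 < k -> size bs = k.-1 -> 0 < x ->
  dval (dvec k bs) x = (x \in nums bs).
Proof.
move=> k0 Hs x0; rewrite /dval /dvec.
case: (leqP x (mk k)) => Hx.
  rewrite (nth_map 0) ?size_iota; last lia.
  rewrite nth_iota; last lia.
  by have -> : 1 + x.-1 = x by lia.
rewrite nth_default ?size_map ?size_iota; last lia.
case: (boolP (x \in nums bs)) => // /(nums_bound k0 Hs); lia.
Qed.

Lemma in_nums bs a c : (a, c) \in cnodes 1 1 bs -> node_num a c \in nums bs.
Proof. move=> H; exact: (map_f (fun p : nat * nat => node_num p.1 p.2) H). Qed.

Lemma nums_in bs a c : 1 <= c <= a -> node_num a c \in nums bs -> (a, c) \in cnodes 1 1 bs.
Proof.
move=> V /mapP [[a' c'] H E].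
have V' : 1 <= c' <= a' by apply: (cnodes_valid _ H).
by have [-> ->] := node_num_inj V V' E.
Qed.

Lemma nu_row k bs y : 0 < k -> size bs = k.-1 -> y \in nu k (dvec k bs) ->
  y = node_num k (1 + count id bs).
Proof.
move=> k0 Hs; rewrite /nu mem_cat => /orP [].
  have H1 : 1 \in nums bs := in_nums (cnodes_head 1 1 bs).
  by rewrite dval_row // H1.
move=> /mapP [[s j] + ->] /=; rewrite mem_filter => /andP [/= /andP [Hd Hc]].
move=> /allpairsPdep [s' [j' [Hs' Hj' [E1 E2]]]]; subst s' j'.
move: Hs' Hj'; rewrite !mem_iota => Hs' Hj'.
have V : 1 <= j <= s by lia.
rewrite dval_row // in Hd; last by rewrite node_numE; lia.
have Hsj := nums_in V Hd.
case: (ltnP s k) => Hsk.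
  move: Hc; rewrite Hsk /=.
  rewrite !dval_row //; try by rewrite node_numE; lia.
  have := cnodes_succ Hsj; rewrite Hs.
  have -> : 1 + k.-1 = k by lia.
  move=> /(_ Hsk) /orP [] /in_nums -> //; by rewrite andbF.
have Esk : s = k by lia.
subst s.
have He := cnodes_end 1 1 bs; rewrite Hs in He.
have E1 : 1 + k.-1 = k by lia.
rewrite E1 in He.
by rewrite (cnodes_uniq Hsj He).
Qed.

Fixpoint dtree_ind' (P : dtree -> Prop) (HL : forall d, P (DLeaf d))
  (HN : forall i c0 c1, (forall t, c0 = Some t -> P t) ->
          (forall t, c1 = Some t -> P t) -> P (DNode i c0 c1)) (t : dtree) {struct t} : P t :=
  match t with
  | DLeaf d => HL d
  | DNode i c0 c1 => HN i c0 c1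
      (match c0 as o return forall t', o = Some t' -> P t' with
       | Some t0 => fun t' E =>
           match E in _ = x return (match x with Some y => P y | None => True end) with
           | erefl => dtree_ind' HL HN t0 end
       | None => fun t' E =>
           False_ind _ (match E in _ = x return (match x with Some _ => False | None => True end) with
                        | erefl => I end)
       end)
      (match c1 as o return forall t', o = Some t' -> P t' with
       | Some t0 => fun t' E =>
           match E in _ = x return (match x with Some y => P y | None => True end) with
           | erefl => dtree_ind' HL HN t0 end
       | None => fun t' E =>
           False_ind _ (match E in _ = x return (match x with Some _ => False | None => True end) with
                        | erefl => I end)
       end)
  end.

Lemma avoid_nums F bs : avoidp 1 1 F bs = all (fun x => x \notin F) (nums bs).
Proof. by rewrite /avoidp /nums all_map. Qed.

Lemma avoid_cons i F bs : avoidp 1 1 (i :: F) bs = (i \notin nums bs) && avoidp 1 1 F bs.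
Proof.
rewrite !avoid_nums; elim: (nums bs) => //= x s IH; rewrite IH !inE !negb_or eq_sym.
by case: (i == x); case: (x \in F); case: (i \in s).
Qed.

Lemma sat_cons T r i b q : sat T r ((i, b) :: q) = (rval T r i == b) && sat T r q.
Proof. by []. Qed.

Definition branchp i (b : bool) (c : option dtree) : seq (word * nat) :=
  if c is Some t then [seq ((i, b) :: p.1, p.2) | p <- dt_paths t] else [::].

Lemma paths_node i c0 c1 : dt_paths (DNode i c0 c1) = branchp i false c0 ++ branchp i true c1.
Proof. by []. Qed.

Lemma branch_has T r i b c : has (fun p => sat T r p.1) (branchp i b c) ->
  exists t, [/\ c = Some t, rval T r i = b & has (fun p => sat T r p.1) (dt_paths t)].
Proof.
case: c => [t|] //= /hasP [[q d] /mapP [q' Hq' [-> ->]]] /=.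
move=> /andP [/eqP Hb Hs]; exists t; split => //.
by apply/hasP; exists q'.
Qed.

Lemma branch_mem i b c t p : c = Some t -> p \in dt_paths t ->
  ((i, b) :: p.1, p.2) \in branchp i b c.
Proof. move=> -> Hp /=; exact: (map_f (fun p : word * nat => ((i, b) :: p.1, p.2)) Hp). Qed.

Lemma main k (k0 : 0 < k) t : forall F,
  (forall p, p \in dt_paths t -> size p.1 + size F + 2 <= k) ->
  (exists bs, size bs = k.-1 /\ avoidp 1 1 F bs) ->
  (forall bs, size bs = k.-1 -> avoidp 1 1 F bs ->
     has (fun p => sat (Tk k) (row_of k bs) p.1) (dt_paths t)) ->
  exists p, p \in dt_paths t /\ exists bs1 bs2,
    [/\ size bs1 = k.-1, size bs2 = k.-1, avoidp 1 1 F bs1, avoidp 1 1 F bs2 &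
        count id bs1 != count id bs2] /\
        sat (Tk k) (row_of k bs1) p.1 /\ sat (Tk k) (row_of k bs2) p.1.
Proof.
elim/dtree_ind': t => [d|i c0 c1 IH0 IH1] F Hdep Hex Hcov.
- exists ([::], d); split; first by rewrite inE.
  have := Hdep ([::], d); rewrite inE eqxx => /(_ isT) /= Hs.
  have [bs1 [bs2 H]] := two_chains (n := k.-1) (s := 1) (j := 1) (F := F) isT
    ltac:(lia) Hex.
  by exists bs1, bs2.
- rewrite paths_node in Hdep Hcov *.
  case: (classic (exists bs, size bs = k.-1 /\ avoidp 1 1 (i :: F) bs)) => Hc.
  +
    have Hr : forall bs, size bs = k.-1 -> avoidp 1 1 (i :: F) bs ->
        rval (Tk k) (row_of k bs) i = false.
      move=> bs Hs; rewrite avoid_cons rval_row // => /andP [H _]; exact: negbTE.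
    have Hcov0 : forall bs, size bs = k.-1 -> avoidp 1 1 (i :: F) bs ->
        exists t0, c0 = Some t0 /\ has (fun p => sat (Tk k) (row_of k bs) p.1) (dt_paths t0).
      move=> bs Hs Ha; have Ha' := Ha; rewrite avoid_cons in Ha'; case/andP: Ha' => _ HaF.
      move: (Hcov bs Hs HaF); rewrite has_cat => /orP [/branch_has [t0 [E _ H]]|/branch_has [t1 [_ E _]]].
        by exists t0.
      by rewrite Hr in E.
    have [bs0 [Hs0 Ha0]] := Hc.
    have [t0 [E0 _]] := Hcov0 bs0 Hs0 Ha0.
    have Hd0 : forall q, q \in dt_paths t0 -> size q.1 + size (i :: F) + 2 <= k.
      move=> q Hq.
      have Hm : ((i, false) :: q.1, q.2) \in branchp i false c0 ++ branchp i true c1.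
        by rewrite mem_cat (branch_mem _ _ E0 Hq).
      have := Hdep _ Hm => /=; lia.
    have Hc0 : forall bs, size bs = k.-1 -> avoidp 1 1 (i :: F) bs ->
        has (fun p => sat (Tk k) (row_of k bs) p.1) (dt_paths t0).
      move=> bs Hs Ha; have [t0' [E H]] := Hcov0 bs Hs Ha.
      by move: E H; rewrite E0 => -[<-].
    have [p [Hp [bs1 [bs2 [[S1 S2 A1 A2 C] [Sat1 Sat2]]]]]] := IH0 t0 E0 (i :: F) Hd0 Hc Hc0.
    exists ((i, false) :: p.1, p.2); split.
      by rewrite mem_cat (branch_mem _ _ E0 Hp).
    exists bs1, bs2; split; first split => //.
    * by move: A1; rewrite avoid_cons => /andP [].
    * by move: A2; rewrite avoid_cons => /andP [].
    * by split; rewrite sat_cons ?Hr ?Sat1 ?Sat2.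
  +
    have Hr : forall bs, size bs = k.-1 -> avoidp 1 1 F bs ->
        rval (Tk k) (row_of k bs) i = true.
      move=> bs Hs Ha; rewrite rval_row //; apply/negPn/negP => Hi.
      by apply: Hc; exists bs; rewrite avoid_cons Hi Ha.
    have Hcov1 : forall bs, size bs = k.-1 -> avoidp 1 1 F bs ->
        exists t1, c1 = Some t1 /\ has (fun p => sat (Tk k) (row_of k bs) p.1) (dt_paths t1).
      move=> bs Hs Ha.
      move: (Hcov bs Hs Ha); rewrite has_cat => /orP [/branch_has [t0 [_ E _]]|/branch_has [t1 [E _ H]]].
        by rewrite Hr in E.
      by exists t1.
    have [bs0 [Hs0 Ha0]] := Hex.
    have [t1 [E1 _]] := Hcov1 bs0 Hs0 Ha0.
    have Hd1 : forall q, q \in dt_paths t1 -> size q.1 + size F + 2 <= k.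
      move=> q Hq.
      have Hm : ((i, true) :: q.1, q.2) \in branchp i false c0 ++ branchp i true c1.
        by rewrite mem_cat (branch_mem _ _ E1 Hq) orbT.
      have := Hdep _ Hm => /=; lia.
    have Hc1 : forall bs, size bs = k.-1 -> avoidp 1 1 F bs ->
        has (fun p => sat (Tk k) (row_of k bs) p.1) (dt_paths t1).
      move=> bs Hs Ha; have [t1' [E H]] := Hcov1 bs Hs Ha.
      by move: E H; rewrite E1 => -[<-].
    have [p [Hp [bs1 [bs2 [[S1 S2 A1 A2 C] [Sat1 Sat2]]]]]] := IH1 t1 E1 F Hd1 Hex Hc1.
    exists ((i, true) :: p.1, p.2); split.
      by rewrite mem_cat (branch_mem _ _ E1 Hp) orbT.
    exists bs1, bs2; split; first by split.
    by split; rewrite sat_cons ?Hr ?Sat1 ?Sat2.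
Qed.

Theorem lemma9 (k : nat) : 0 < k ->
  forall t : dtree, is_det_tree (Tk k) t -> k.-1 <= dt_depth t.
Proof.
move=> k0 t /and4P [_ _ Hcov Hpi].
rewrite leqNgt; apply/negP => Hlt.
have Hdep : forall p, p \in dt_paths t -> size p.1 + size ([::] : seq nat) + 2 <= k.
  move=> p Hp.
  have := @leq_bigmax_seq _ (dt_paths t) xpredT (fun p : word * nat => size p.1) p Hp isT.
  rewrite /dt_depth in Hlt => /= H; have H2 : size p.1 < k.-1 := leq_ltn_trans H Hlt; move: H2; rewrite addn0 addn2; by case: (k) k0 => [//|kk] _ /=; rewrite ltnS.
have Hex : exists bs, size bs = k.-1 /\ avoidp 1 1 [::] bs.
  by exists (nseq k.-1 false); rewrite size_nseq; split => //; apply/allP.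
have Hc : forall bs, size bs = k.-1 -> avoidp 1 1 [::] bs ->
    has (fun p => sat (Tk k) (row_of k bs) p.1) (dt_paths t).
  by move=> bs _ _; apply: (allP Hcov); exact: row_in.
have [p [Hp [bs1 [bs2 [[S1 S2 _ _ C] [Sat1 Sat2]]]]]] := main k0 Hdep Hex Hc.
move/allP: Hpi => Hpi; have := Hpi p Hp.
have Hm1 : row_of k bs1 \in subrows (Tk k) p.1 by rewrite mem_filter Sat1 row_in.
have Hm2 : row_of k bs2 \in subrows (Tk k) p.1 by rewrite mem_filter Sat2 row_in.
have Hne : (subrows (Tk k) p.1 == [::]) = false by move: Hm1; case: (subrows (Tk k) p.1).
rewrite Hne orFb /in_Pi => /allP Hall.
have E1 := nu_row k0 S1 (Hall _ Hm1).
have E2 := nu_row k0 S2 (Hall _ Hm2).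
move: C; rewrite E1 !node_numE in E2; lia.
Qed.
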